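(* Given the ability to perform incoherent unitaries, computational basis measurements and classical control (supplemented with an arbitrary ancillary state), it is impossible to implement $n$ Hadamards $H^{\otimes n}$ $\epsilon$-approximately with non-zero probability for $0\le \epsilon < 1-2^{-n}$. In particular, a single Hadamard cannot be implemented $\epsilon$-approximately with non-zero probability for $0\le\epsilon<\tfrac12$.
   Context: Fix the computational basis $\{|x\rangle\}$. A unitary is incoherent if it has the form $U=\sum_x e^{i\theta_x}|\pi(x)\rangle\langle x|$ for real $\theta_x$ and a permutation $\pi$. Such operations with an ancilla $\tau$ are modelled as channels $\rho\mapsto \mathrm{Tr}_2\big(U(\rho\otimes\tau)U^\dagger\big)$ with $U$ incoherent, or probabilistically as convex combinations of normalised subchannels $\rho\mapsto \alpha\,\mathrm{Tr}_X\big((I\otimes|x\rangle\langle x|)\,U(\rho\otimes\tau)U^\dagger\big)$ with $\alpha$ independent of $\rho$. A channel $\mathcal{E}$ $\epsilon$-approximates $\mathcal{V}$ if the induced trace distance $\max_\rho \tfrac12\|\mathcal{E}(\rho)-\mathcal{V}(\rho)\|_1\le\epsilon$. *)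

(* Defs.v *)
From HB Require Import structures.
From mathcomp Require Import all_boot all_order all_algebra.
From mathcomp Require Import fingroup perm sesquilinear spectral.
From mathcomp Require mxtens.

Set Implicit Arguments.
Unset Strict Implicit.
Unset Printing Implicit Defensive.

Import Order.TTheory GRing.Theory Num.Theory Num.Def.
Local Open Scope ring_scope.

Section Quantum.
Variable C : numClosedFieldType.

Definition adjmx m k (A : 'M[C]_(m, k)) : 'M[C]_(k, m) := (map_mx conjC A)^T.

Definition psdmx k (A : 'M[C]_k) : Prop :=
  forall v : 'rV[C]_k, 0 <= (v *m A *m adjmx v) 0 0.

Definition density k (A : 'M[C]_k) : Prop := psdmx A /\ \tr A = 1.

(* trace norm ||A||_1 = Tr sqrt(A^dagger A) = sum of the square roots of the
   eigenvalues of A^dagger A (the singular values of A) *)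
Definition trace_norm k (A : 'M[C]_k) : C :=
  \sum_(i < k) sqrtC (spectral_diag (adjmx A *m A) 0 i).

Definition trace_dist k (A B : 'M[C]_k) : C := 2^-1 * trace_norm (A - B).

Definition incoherent_unitary N (U : 'M[C]_N) : Prop :=
  exists (pi : 'S_N) (ph : 'I_N -> C),
    (forall j, `|ph j| = 1) /\
    U = \matrix_(i, j) (if i == pi j then ph j else 0).

Definition hadamard : 'M[C]_2 :=
  (sqrtC 2)^-1 *: \matrix_(i < 2, j < 2) ((-1) ^+ (i * j)%N).
Definition hadamard_n n : 'M[C]_(2 ^ n) := mxtens.ntensmx hadamard n.

(* Joint index of system (a : 'I_s) (x) measured ancilla register
   (x : 'I_b) (x) discarded ancilla register (c : 'I_d). *)
Definition jidx s b d (a : 'I_s) (x : 'I_b) (c : 'I_d) : 'I_(s * (b * d)) :=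
  mxtens.mxtens_index (a, mxtens.mxtens_index (x, c)).

(* Unnormalised subchannel
     rho |-> Tr_{BD}((I (x) |x><x| (x) I) U (rho (x) tau) U^dagger)
   where the ancilla tau lives on B (x) D, B is measured in the computational
   basis (outcome x) and D is discarded. *)
Definition subchannel s b d (U : 'M[C]_(s * (b * d))) (tau : 'M[C]_(b * d))
    (x : 'I_b) (rho : 'M[C]_s) : 'M[C]_s :=
  let J := U *m mxtens.tensmx rho tau *m adjmx U in
  \matrix_(a, a') \sum_(c < d) J (jidx a x c) (jidx a' x c).

Definition normalised_subchannel s (S : 'M[C]_s -> 'M[C]_s) : Prop :=
  exists (b d : nat) (tau : 'M[C]_(b * d)) (U : 'M[C]_(s * (b * d)))
         (x : 'I_b) (alpha : C),
    [/\ density tau, incoherent_unitary U, 0 < alpha,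
        (forall rho, density rho -> alpha * \tr (subchannel U tau x rho) = 1) &
        (forall rho, S rho = alpha *: subchannel U tau x rho)].

(* channels implementable with incoherent unitaries, computational basis
   measurements, classical control and an arbitrary ancilla: convex
   combinations of normalised subchannels *)
Definition incoherent_implementable s (E : 'M[C]_s -> 'M[C]_s) : Prop :=
  exists (m : nat) (p : 'I_m -> C) (S : 'I_m -> 'M[C]_s -> 'M[C]_s),
    [/\ forall k, 0 <= p k, \sum_(k < m) p k = 1,
        forall k, normalised_subchannel (S k) &
        forall rho, E rho = \sum_(k < m) p k *: S k rho].

Definition eps_approximates s (E : 'M[C]_s -> 'M[C]_s) (V : 'M[C]_s)
    (eps : C) : Prop :=
  forall rho, density rho -> trace_dist (E rho) (V *m rho *m adjmx V) <= eps.

End Quantum.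

(* Main.v *)
Require Import Defs.
From HB Require Import structures.
From mathcomp Require Import all_boot all_order all_algebra.
From mathcomp Require Import fingroup perm sesquilinear spectral.
From mathcomp Require mxtens.
From mathcomp Require Import ring.
Set Implicit Arguments.
Unset Strict Implicit.
Unset Printing Implicit Defensive.
Import Order.TTheory GRing.Theory Num.Theory Num.Def.
Local Open Scope ring_scope.

Section S.
Variable C : numClosedFieldType.

Lemma adjmxE m k (A : 'M[C]_(m, k)) : adjmx A = (A ^t* )%sesqui.
Proof. by rewrite /adjmx map_trmx. Qed.

Lemma adjmxM m k l (A : 'M[C]_(m, k)) (B : 'M[C]_(k, l)) :
  adjmx (A *m B) = adjmx B *m adjmx A.
Proof. by rewrite /adjmx map_mxM trmx_mul. Qed.

Lemma adjmxK m k (A : 'M[C]_(m, k)) : adjmx (adjmx A) = A.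
Proof. by rewrite /adjmx map_trmx trmxK -map_mx_comp map_mx_id // => x /=; rewrite conjCK. Qed.

Lemma adjmxD m k (A B : 'M[C]_(m, k)) : adjmx (A + B) = adjmx A + adjmx B.
Proof. by apply/matrixP=> i j; rewrite !mxE rmorphD. Qed.

Lemma adjmx_delta m k (i : 'I_m) (j : 'I_k) : adjmx (delta_mx i j : 'M[C]_(m,k)) = delta_mx j i.
Proof. by apply/matrixP => a b; rewrite !mxE; case: eqP; case: eqP => //= _ _; rewrite ?conjC1 ?conjC0. Qed.

Lemma adjmxE_entry m k (A : 'M[C]_(m, k)) i j : adjmx A i j = (A j i)^*.
Proof. by rewrite !mxE. Qed.


Local Notation dot := (@dotmx C _).

Lemma entry_row m k l (P : 'M[C]_(m,k)) (B : 'M[C]_(k,k)) (Q : 'M[C]_(k,l)) i j :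
  (P *m B *m Q) i j = (row i P *m B *m col j Q) 0 0.
Proof. rewrite colE !mulmxA -colE. rewrite [in RHS]mxE. rewrite -!row_mul. rewrite [in RHS]mxE. done. Qed.

Lemma adj_row k (P : 'M[C]_k) i : adjmx (row i P) = col i (adjmx P).
Proof. by apply/matrixP=> a b; rewrite !mxE. Qed.

Lemma dot_entry k (P B : 'M[C]_k) i :
  (P *m B *m adjmx P) i i = (row i P *m B *m adjmx (row i P)) 0 0.
Proof. by rewrite entry_row adj_row. Qed.

Lemma trace_norm_ge k (X W : 'M[C]_k) : W *m adjmx W = 1%:M ->
  `|\tr (X *m W)| <= trace_norm X.
Proof.
move=> WU.
set A := adjmx X *m X.
have An : A \is normalmx.
  by apply/normalmxP; rewrite -!adjmxE /A adjmxM adjmxK.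
have /orthomx_spectralP AE := An.
set P := spectralmx A in AE; set d := spectral_diag A in AE.
have PU : P *m adjmx P = 1%:M by rewrite adjmxE; apply/unitarymxP/spectral_unitarymx.
have PU' : adjmx P *m P = 1%:M.
  by rewrite adjmxE -invmx_unitary ?spectral_unitarymx // mulVmx // spectral_unit.
rewrite invmx_unitary ?spectral_unitarymx // -adjmxE in AE.
have dE i : d 0 i = (P *m A *m adjmx P) i i.
  rewrite AE !mulmxA PU mul1mx -!mulmxA PU mulmx1 mxE eqxx mulr1n //.
have -> : \tr (X *m W) = \sum_i (P *m (W *m X) *m adjmx P) i i.
  rewrite mxtrace_mulC; set M := P *m (W *m X) *m adjmx P.
  have -> : W *m X = adjmx P *m M *m P.
    by rewrite /M !mulmxA PU' mul1mx -mulmxA PU' mulmx1.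
  by rewrite mxtrace_mulC mulmxA PU mul1mx.
rewrite /trace_norm -/A -/d.
apply: le_trans (ler_norm_sum _ _ _) _.
apply: ler_sum => i _.
rewrite dot_entry dE dot_entry.
have CS := leif_le (CauchySchwarz_sqrt (@dotmx C k) (row i P *m W) (row i P *m adjmx X)).
have e1 (u v : 'rV[C]_k) : @dotmx C k u v = (u *m adjmx v) 0 0 by rewrite dotmxE adjmxE.
move: CS => /= [+ _]; rewrite !e1 !adjmxM !adjmxK !mulmxA.
rewrite -[row i P *m W *m adjmx W]mulmxA WU mulmx1.
have := dot_entry P 1%:M i; rewrite !mulmx1 PU mxE eqxx /= => <-.
by rewrite sqrtC1 mul1r.
Qed.

Lemma tr_delta k (M : 'M[C]_k) b : \tr (M *m delta_mx b b) = M b b.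
Proof.
rewrite -(mul_delta_mx (0:'I_1)) mulmxA mxtrace_mulC mulmxA -rowE -colE trace_mx11.
by rewrite !mxE.
Qed.

Lemma trace_dist_ge k (D : 'M[C]_k) b : \tr D = 1 ->
  `|1 - D b b| <= trace_dist D (delta_mx b b).
Proof.
move=> trD.
set e : 'M[C]_k := delta_mx b b.
set W : 'M[C]_k := 1%:M - 2 *: e.
have ee : e *m e = e by rewrite mul_delta_mx.
have eW : e *m W = - e by rewrite /W mulmxBr mulmx1 -scalemxAr ee scaler_nat mulr2n opprD addrA subrr add0r.
have WW : W *m adjmx W = 1%:M.
  have -> : adjmx W = W.
    apply/matrixP=> i j; rewrite !mxE rmorphB rmorphM /= !rmorph_nat.
    by rewrite eq_sym andbC.
  rewrite {1}/W mulmxBl mul1mx -scalemxAl eW /W.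
  by rewrite scalerN opprK subrK.
have tXW : \tr ((D - e) *m W) = 2 * (1 - D b b).
  rewrite mulmxBl eW opprK mxtraceD /W mulmxBr mulmx1 -scalemxAr raddfB /= mxtraceZ tr_delta trD.
  rewrite /e -[delta_mx b b]mul1mx tr_delta mxE eqxx /=.
  ring.
have := trace_norm_ge (D - e) WW; rewrite tXW normrM (ger0_norm (ler0n _ 2)) => H.
by rewrite /trace_dist mulrC ler_pdivlMr ?ltr0n // mulrC.
Qed.

Lemma incoh_diag N (U : 'M[C]_N) : incoherent_unitary U ->
  exists f : 'I_N -> 'I_N, forall (M : 'M[C]_N) i, (U *m M *m adjmx U) i i = M (f i) (f i).
Proof.
move=> [pi [ph [hph ->]]]; exists (fun i => (pi^-1)%g i) => M i.
set j0 := (pi^-1)%g i.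
have hpi l : (i == pi l) = (l == j0).
  by apply/eqP/eqP => [h|->]; rewrite /j0 ?h ?permK ?permKV.
rewrite mxE (bigD1 j0) //= big1 ?addr0; last first.
  by move=> l /negbTE hl; rewrite !mxE hpi hl conjC0 mulr0.
rewrite mxE (bigD1 j0) //= big1 ?addr0; last first.
  by move=> l /negbTE hl; rewrite !mxE hpi hl mul0r.
rewrite !mxE hpi eqxx mulrAC. rewrite -(normCK (ph j0)) hph expr1n mul1r.
reflexivity.
Qed.

Lemma subchannel_diag s b d (U : 'M[C]_(s * (b * d))) tau x (rho rho' : 'M[C]_s) :
  incoherent_unitary U -> (forall a, rho a a = rho' a a) ->
  forall a, subchannel U tau x rho a a = subchannel U tau x rho' a a.
Proof.
move=> /incoh_diag [f hf] hr a; rewrite !mxE; apply: eq_bigr => c _.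
rewrite !hf; case: (mxtens.mxtens_indexP (f _)) => a' y.
by rewrite !mxtens.tensmxE hr.
Qed.

Lemma impl_diag s (E : 'M[C]_s -> 'M[C]_s) (rho rho' : 'M[C]_s) :
  incoherent_implementable E -> (forall a, rho a a = rho' a a) ->
  forall a, E rho a a = E rho' a a.
Proof.
move=> [m [p [S [_ _ hS hE]]]] hr a; rewrite !hE !summxE; apply: eq_bigr => k _.
have [b [d [tau [U [x [alpha [_ hU _ _ hSk]]]]]]] := hS k.
rewrite !hSk !mxE; congr (_ * (_ * _)).
by have := subchannel_diag tau x hU hr a; rewrite !mxE.
Qed.

Lemma impl_trace s (E : 'M[C]_s -> 'M[C]_s) (rho : 'M[C]_s) :
  incoherent_implementable E -> density rho -> \tr (E rho) = 1.
Proof.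
move=> [m [p [S [_ hp1 hS hE]]]] hr; rewrite hE raddf_sum /= -hp1; apply: eq_bigr => k _.
have [b [d [tau [U [x [alpha [_ hU _ htr hSk]]]]]]] := hS k.
by rewrite mxtraceZ hSk mxtraceZ htr // mulr1.
Qed.

Lemma adjmx_tens m k (A : 'M[C]_m) (B : 'M[C]_k) :
  adjmx (mxtens.tensmx A B) = mxtens.tensmx (adjmx A) (adjmx B).
Proof.
apply/matrixP=> i j.
case: (mxtens.mxtens_indexP i) => i1 i2; case: (mxtens.mxtens_indexP j) => j1 j2.
by rewrite /adjmx !mxE !mxtens.mxtens_indexK /= rmorphM.
Qed.

Lemma tens11 m k : mxtens.tensmx (1%:M : 'M[C]_m) (1%:M : 'M[C]_k) = 1%:M.
Proof.
apply/matrixP=> i j.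
case: (mxtens.mxtens_indexP i) => i1 i2; case: (mxtens.mxtens_indexP j) => j1 j2.
rewrite mxtens.tensmxE !mxE (inj_eq (can_inj (@mxtens.mxtens_indexK _ _))).
by rewrite xpair_eqE -natrM mulnb.
Qed.

Lemma tens_unitary m k (A : 'M[C]_m) (B : 'M[C]_k) cA cB :
  A *m adjmx A = 1%:M -> B *m adjmx B = 1%:M ->
  (forall i j, A i j * (A i j)^* = cA) -> (forall i j, B i j * (B i j)^* = cB) ->
  mxtens.tensmx A B *m adjmx (mxtens.tensmx A B) = 1%:M /\
  forall i j, mxtens.tensmx A B i j * (mxtens.tensmx A B i j)^* = cA * cB.
Proof.
move=> hA hB eA eB; split.
  by rewrite adjmx_tens mxtens.tensmx_mul hA hB tens11.
move=> i j.
case: (mxtens.mxtens_indexP i) => i1 i2; case: (mxtens.mxtens_indexP j) => j1 j2.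
by rewrite mxtens.tensmxE rmorphM mulrACA eA eB.
Qed.

Lemma sqrt2_conj : (sqrtC (2 : C))^-1^* = (sqrtC 2)^-1.
Proof. by rewrite fmorphV /= conj_Creal // realE sqrtC_ge0 ler0n. Qed.

Lemma had_conj i j : (hadamard C i j)^* = hadamard C i j.
Proof.
rewrite !mxE; apply: conj_Creal.
by rewrite rpredM // ?rpredV ?rpredX ?rpredN ?rpred1 // realE sqrtC_ge0 ler0n.
Qed.

Lemma hadamard_props :
  hadamard C *m adjmx (hadamard C) = 1%:M /\
  forall i j, hadamard C i j * (hadamard C i j)^* = 2^-1.
Proof.
have s2 : sqrtC (2 : C) ^+ 2 = 2 by rewrite sqrtCK.
have tt : (sqrtC (2 : C))^-1 * (sqrtC 2)^-1 = 2^-1 by rewrite -invfM -expr2 s2.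
have m1 k : ((-1 : C) ^+ k) * ((-1) ^+ k) = 1 by rewrite -exprMn mulrNN mulr1 expr1n.
split; last first.
  move=> i j; rewrite had_conj !mxE mulrACA tt m1 mulr1 //.
apply/matrixP=> i j; rewrite mxE.
under eq_bigr do rewrite [adjmx _ _ _]mxE [map_mx _ _ _ _]mxE had_conj.
have q (a b : C) : (sqrtC 2)^-1 * a * ((sqrtC 2)^-1 * b) = 2^-1 * (a * b).
  by rewrite mulrACA tt.
have hE (a b : 'I_2) : hadamard C a b = (sqrtC 2)^-1 * (-1) ^+ (a * b) by rewrite !mxE.
rewrite !big_ord_recl big_ord0 !hE !q !mxE.
have h2 : (2:C) != 0 by rewrite pnatr_eq0.
case: i => [[|[|//]]] ?; case: j => [[|[|//]]] ? /=; rewrite ?muln0 ?muln1 ?expr0 ?expr1.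
all: field.
all: by [].
Qed.

Lemma adjmx1 k : adjmx (1%:M : 'M[C]_k) = 1%:M.
Proof. by apply/matrixP=> a b; rewrite !mxE eq_sym; case: eqP => _; rewrite ?conjC1 ?conjC0. Qed.

Lemma hadn_props n :
  hadamard_n C n *m adjmx (hadamard_n C n) = 1%:M /\
  forall i j, hadamard_n C n i j * (hadamard_n C n i j)^* = (2 ^+ n)^-1.
Proof.
case: n => [|k].
  rewrite /hadamard_n /mxtens.ntensmx adjmx1 mulmx1 expr0 invr1; split => //.
  by case=> [[|//] ?]; case=> [[|//] ?]; rewrite mxE /= conjC1 mulr1.
rewrite /hadamard_n /mxtens.ntensmx.
elim: k => [|k [IH1 IH2]] /=.
  by have [h1 h2] := hadamard_props; rewrite expr1.
have [h1 h2] := hadamard_props.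
have [t1 t2] := tens_unitary h1 IH1 h2 IH2.
split; first exact: t1.
by move=> i j; rewrite t2 -invfM -exprS.
Qed.

Lemma psd_adj k m (R : 'M[C]_(m, k)) : psdmx (adjmx R *m R).
Proof.
move=> v; rewrite mulmxA.
have -> : v *m adjmx R *m R *m adjmx v = (v *m adjmx R) *m adjmx (v *m adjmx R).
  by rewrite adjmxM adjmxK !mulmxA.
set w := v *m adjmx R; rewrite mxE sumr_ge0 // => l _.
by rewrite [adjmx w _ _]mxE [map_mx _ _ _ _]mxE mul_conjC_ge0.
Qed.

Lemma trace_adj k m (R : 'M[C]_(m, k)) : \tr (adjmx R *m R) = \tr (R *m adjmx R).
Proof. exact: mxtrace_mulC. Qed.

End S.

Unset Implicit Arguments.

Theorem theorem2 (C : numClosedFieldType) (n : nat)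
    (E : 'M[C]_(2 ^ n) -> 'M[C]_(2 ^ n)) (eps : C) :
  incoherent_implementable E -> 0 <= eps -> eps < 1 - 2 ^- n ->
  ~ eps_approximates E (hadamard_n C n) eps.
Proof.
move=> hE heps0 hepsl happrox.
set Hn := hadamard_n C n.
have [HU HE] := hadn_props C n; rewrite -/Hn in HU HE.
set rho := fun b : 'I_(2 ^ n) => adjmx (row b Hn) *m row b Hn.
set c : C := (2 ^+ n)^-1.
have x0 : (0 : C) < 2 ^+ n by rewrite exprn_gt0 // ltr0n.
have xn0 : (2 ^+ n : C) != 0 by rewrite lt0r_neq0.
set rho0 : 'M[C]_(2 ^ n) := c%:M.
have dens b : density (rho b).
  split; first exact: psd_adj.
  rewrite /rho trace_adj trace_mx11.
  have := dot_entry Hn 1%:M b; rewrite !mulmx1 HU mxE eqxx /= => <- //.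
have target b : Hn *m rho b *m adjmx Hn = delta_mx b b.
  have e1 : row b Hn *m adjmx Hn = delta_mx 0 b by rewrite -row_mul HU row1.
  have e2 : Hn *m adjmx (row b Hn) = delta_mx b 0.
    by rewrite -adjmx_delta -e1 adjmxM adjmxK.
  by rewrite /rho mulmxA -mulmxA e1 e2 mul_delta_mx.
have drho b a : rho b a a = c.
  by rewrite /rho mxE big_ord1 !mxE mulrC HE.
have dens0 : density rho0.
  split.
    move=> v; rewrite mul_mx_scalar -scalemxAl mxE mulr_ge0 //.
      by rewrite invr_ge0 ltW.
    by rewrite mxE sumr_ge0 // => l _; rewrite [adjmx v _ _]mxE [map_mx _ _ _ _]mxE mul_conjC_ge0.
  by rewrite mxtrace_scalar -mulr_natr natrX mulVf.
have drho0 a : rho0 a a = c by rewrite mxE eqxx mulr1n.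
set D := E rho0.
have trD : \tr D = 1 by exact: impl_trace hE dens0.
have hb b : `|1 - D b b| <= eps.
  have -> : D b b = E (rho b) b b.
    by apply: impl_diag => // a; rewrite drho drho0.
  apply: le_trans (trace_dist_ge _ (impl_trace hE (dens b))) _.
  by rewrite -(target b); apply: happrox.
have hs : \sum_(b < 2 ^ n) `|1 - D b b| <= \sum_(b < 2 ^ n) eps by apply: ler_sum.
have hs2 : (2 ^+ n : C) - 1 <= eps * 2 ^+ n.
  rewrite sumr_const card_ord -mulr_natr natrX in hs.
  apply: le_trans hs; apply: le_trans (ler_norm_sum _ _ _).
  rewrite sumrB sumr_const card_ord -mulr_natr mul1r natrX -/(mxtrace D) trD.
  by rewrite ger0_norm // subr_ge0 exprn_ege1 // ler1n.
have : 1 - c <= eps.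
  rewrite -(ler_pM2r x0) mulrBl mul1r /c mulVf //.
have := lt_le_trans hepsl; rewrite /c => h /h.
by rewrite ltxx.
Qed.
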